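(* Let $X$ be a compact metric space with metric $d$, let $L>0$, and let $f\colon X\to X$ be a continuous map with the $L$-Lipschitz shadowing property. Then $CR(f)$ is $f$-invariant and the restriction $f|_{CR(f)}\colon CR(f)\to CR(f)$ (with the restricted metric) also has the $L$-Lipschitz shadowing property.
   Context: For a continuous map $g\colon Y\to Y$ on a metric space $(Y,d)$ and $\delta>0$, a sequence $(x_i)_{i\ge0}$ in $Y$ is a $\delta$-pseudo orbit of $g$ if $d(g(x_i),x_{i+1})\le\delta$ for all $i\ge0$; it is $\epsilon$-shadowed by $y\in Y$ if $d(g^i(y),x_i)\le\epsilon$ for all $i\ge0$. $g$ has the $L$-Lipschitz shadowing property if there is $\delta_0>0$ such that for every $0<\delta\le\delta_0$, every $\delta$-pseudo orbit of $g$ is $L\delta$-shadowed by some point of $Y$. A $\delta$-chain of $f$ is a finite sequence $(x_i)_{i=0}^k$, $k\ge1$, with $d(f(x_i),x_{i+1})\le\delta$ for $0\le i\le k-1$; a $\delta$-cycle is one with $x_0=x_k$. $CR(f)$ is the set of $x\in X$ such that for every $\delta>0$ there is a $\delta$-cycle of $f$ with $x_0=x_k=x$. *)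

(* Defs.v *)
From Stdlib Require Import Reals.
Open Scope R_scope.

Definition is_metric {Y : Type} (d : Y -> Y -> R) : Prop :=
  (forall x y, 0 <= d x y) /\
  (forall x y, d x y = 0 <-> x = y) /\
  (forall x y, d x y = d y x) /\
  (forall x y z, d x z <= d x y + d y z).

Definition metric_open {Y : Type} (d : Y -> Y -> R) (U : Y -> Prop) : Prop :=
  forall x, U x -> exists e, 0 < e /\ forall y, d x y < e -> U y.

Definition metric_compact {Y : Type} (d : Y -> Y -> R) : Prop :=
  forall (I : Type) (U : I -> Y -> Prop),
    (forall i, metric_open d (U i)) ->
    (forall x, exists i, U i x) ->
    exists l : list I, forall x, exists i, List.In i l /\ U i x.

Definition metric_continuous {Y : Type} (d : Y -> Y -> R) (g : Y -> Y) : Prop :=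
  forall x e, 0 < e -> exists r, 0 < r /\ forall y, d x y < r -> d (g x) (g y) < e.

Definition pseudo_orbit {Y : Type} (d : Y -> Y -> R) (g : Y -> Y)
  (delta : R) (xs : nat -> Y) : Prop :=
  forall i, d (g (xs i)) (xs (S i)) <= delta.

Definition shadowed {Y : Type} (d : Y -> Y -> R) (g : Y -> Y)
  (eps : R) (xs : nat -> Y) (y : Y) : Prop :=
  forall i, d (Nat.iter i g y) (xs i) <= eps.

Definition lipschitz_shadowing {Y : Type} (d : Y -> Y -> R) (g : Y -> Y) (L : R) : Prop :=
  exists delta0, 0 < delta0 /\
    forall delta, 0 < delta -> delta <= delta0 ->
      forall xs, pseudo_orbit d g delta xs ->
        exists y, shadowed d g (L * delta) xs y.

Definition CR {X : Type} (d : X -> X -> R) (f : X -> X) (x : X) : Prop :=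
  forall delta, 0 < delta ->
    exists (k : nat) (xs : nat -> X),
      (1 <= k)%nat /\ xs 0%nat = x /\ xs k = x /\
      forall i, (i < k)%nat -> d (f (xs i)) (xs (S i)) <= delta.

Definition restrict_map {X : Type} (f : X -> X) (A : X -> Prop)
  (H : forall x, A x -> A (f x)) : {x : X | A x} -> {x : X | A x} :=
  fun y => exist A (f (proj1_sig y)) (H (proj1_sig y) (proj2_sig y)).

Definition restrict_metric {X : Type} (d : X -> X -> R) (A : X -> Prop) :
  {x : X | A x} -> {x : X | A x} -> R :=
  fun y z => d (proj1_sig y) (proj1_sig z).

(* Main.v *)
Require Import Defs.
From Stdlib Require Import Reals.
From Stdlib Require Import Lra Lia Classical ClassicalEpsilon List Arith ZArith.
Open Scope R_scope.

Lemma met_refl {X} (d : X -> X -> R) : is_metric d -> forall x, d x x = 0.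
Proof. intros [_ [H _]] x. apply H. reflexivity. Qed.
Lemma met_sym {X} (d : X -> X -> R) : is_metric d -> forall x y, d x y = d y x.
Proof. intros [_ [_ [H _]]]. exact H. Qed.
Lemma met_tri {X} (d : X -> X -> R) : is_metric d -> forall x y z, d x z <= d x y + d y z.
Proof. intros [_ [_ [_ H]]]. exact H. Qed.

Lemma iter_cont {X} (d : X -> X -> R) f : metric_continuous d f ->
  forall i x e, 0 < e -> exists r, 0 < r /\ forall y, d x y < r ->
    d (Nat.iter i f x) (Nat.iter i f y) < e.
Proof.
  intros Hc i; induction i as [|i IH]; intros x e He.
  - exists e; split; auto.
  - simpl. destruct (Hc (Nat.iter i f x) e He) as [r1 [Hr1 H1]].
    destruct (IH x r1 Hr1) as [r [Hr H]]. exists r; split; auto.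
Qed.

Definition chain {X} (d : X -> X -> R) (f : X -> X) eta a b :=
  exists (k : nat) (c : nat -> X), (1 <= k)%nat /\ c 0%nat = a /\ c k = b /\
    forall j, (j < k)%nat -> d (f (c j)) (c (S j)) <= eta.

Lemma CR_crit {X} (d : X -> X -> R) f z : is_metric d ->
  (forall e, 0 < e -> exists k (c : nat -> X), (1 <= k)%nat /\
     d (f z) (f (c 0%nat)) <= e /\
     (forall j, (j < k)%nat -> d (f (c j)) (c (S j)) <= e) /\ d (c k) z <= e) ->
  CR d f z.
Proof.
  intros Hm H delta Hd.
  destruct (H (delta/3)) as [k [c [Hk [H0 [Hs Hend]]]]]; [lra|].
  exists k, (fun j => if Nat.eqb j 0 then z else if Nat.ltb j k then c j else z).
  split; [exact Hk|]. split; [reflexivity|]. split.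
  { replace (Nat.eqb k 0) with false by (symmetry; apply Nat.eqb_neq; lia).
    rewrite Nat.ltb_irrefl. reflexivity. }
  intros i Hi. destruct i as [|i].
  - simpl. destruct (Nat.ltb 1 k) eqn:E.
    + pose proof (Hs 0%nat Hk). pose proof (met_tri d Hm (f z) (f (c 0%nat)) (c 1%nat)). lra.
    + apply Nat.ltb_ge in E. assert (k = 1%nat) by lia. subst k.
      pose proof (Hs 0%nat Hk).
      pose proof (met_tri d Hm (f z) (f (c 0%nat)) (c 1%nat)).
      pose proof (met_tri d Hm (f z) (c 1%nat) z). lra.
  - simpl Nat.eqb. cbv iota.
    replace (Nat.ltb (S i) k) with true by (symmetry; apply Nat.ltb_lt; lia).
    destruct (Nat.ltb (S (S i)) k) eqn:E.
    + pose proof (Hs (S i) Hi). lra.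
    + apply Nat.ltb_ge in E. assert (k = S (S i)) by lia. subst k.
      pose proof (Hs (S i) Hi).
      pose proof (met_tri d Hm (f (c (S i))) (c (S (S i))) z). lra.
Qed.

Record bidx {X} (d : X -> X -> R) (v : nat -> X) := BI {
  bz : X; be : R; bN : nat; bpos : 0 < be;
  bfar : forall n, (bN <= n)%nat -> be <= d (v n) bz }.
Arguments bz {X d v}. Arguments be {X d v}. Arguments bN {X d v}.
Arguments bfar {X d v}.

Definition cluster {X} (d : X -> X -> R) (v : nat -> X) z :=
  forall e, 0 < e -> forall N, exists n, (N <= n)%nat /\ d (v n) z < e.

Lemma cluster_exists {X} (d : X -> X -> R) : is_metric d -> metric_compact d ->
  forall v : nat -> X, exists z, cluster d v z.
Proof.
  intros Hm Hc v. apply NNPP; intro Hno.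
  assert (Hfar : forall z, exists e N, 0 < e /\ forall n, (N <= n)%nat -> e <= d (v n) z).
  { intro z. apply NNPP; intro H1. apply Hno. exists z. intros e He N.
    apply NNPP; intro H2. apply H1. exists e, N. split; auto. intros n Hn.
    apply Rnot_lt_le. intro H3. apply H2. exists n; auto. }
  destruct (Hc (bidx d v) (fun i y => d (bz i) y < be i)) as [l Hl].
  - intros i x Hx. exists (be i - d (bz i) x). split; [lra|]. intros y Hy.
    pose proof (met_tri d Hm (bz i) x y). lra.
  - intro x. destruct (Hfar x) as [e [N [He HN]]]. exists (BI _ d v x e N He HN).
    simpl. rewrite met_refl; auto.
  - set (M := fold_right (fun i acc => Nat.max (bN i) acc) 0%nat l).
    assert (HM : forall i, In i l -> (bN i <= M)%nat).
    { subst M. clear. induction l as [|a l IH]; simpl; intros i Hi; [contradiction|].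
      destruct Hi as [Hi|Hi]; [subst; lia|]. specialize (IH i Hi). lia. }
    destruct (Hl (v M)) as [i [Hi Hu]]. pose proof (bfar i M (HM i Hi)) as Hf.
    rewrite met_sym in Hf; auto. lra.
Qed.

Lemma cluster_shadow {X} (d : X -> X -> R) f : is_metric d -> metric_continuous d f ->
  forall (v : nat -> X) (xs : nat -> X) (b : R) (e : nat -> R) z,
  cluster d v z ->
  (forall eta, 0 < eta -> exists N, forall n, (N <= n)%nat -> e n <= eta) ->
  (forall i, exists N, forall n, (N <= n)%nat -> d (Nat.iter i f (v n)) (xs i) <= b + e n) ->
  forall i, d (Nat.iter i f z) (xs i) <= b.
Proof.
  intros Hm Hc v xs b e z Hcl He Hb i.
  apply Rnot_lt_le; intro Hlt.
  set (eta := (d (Nat.iter i f z) (xs i) - b)/3).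
  destruct (He eta) as [N1 H1]; [unfold eta; lra|].
  destruct (Hb i) as [N2 H2].
  destruct (iter_cont d f Hc i z eta) as [r [Hr H3]]; [unfold eta; lra|].
  destruct (Hcl r Hr (N1+N2)%nat) as [n [Hn Hd]].
  pose proof (H1 n ltac:(lia)). pose proof (H2 n ltac:(lia)).
  rewrite met_sym in Hd; auto. pose proof (H3 _ Hd).
  pose proof (met_tri d Hm (Nat.iter i f z) (Nat.iter i f (v n)) (xs i)).
  unfold eta in *. lra.
Qed.

Lemma cluster_CR {X} (d : X -> X -> R) f : is_metric d -> metric_continuous d f ->
  forall (v : nat -> X) z, (forall n, CR d f (v n)) -> cluster d v z -> CR d f z.
Proof.
  intros Hm Hc v z Hv Hcl. apply CR_crit; auto. intros e He.
  destruct (Hc z e He) as [r [Hr Hf]].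
  destruct (Hcl (Rmin r e) ltac:(apply Rmin_pos; lra) 0%nat) as [n [_ Hn]].
  destruct (Hv n e He) as [k [c [Hk [H0 [Hkk Hs]]]]].
  exists k, c. split; auto. rewrite H0, Hkk. split; [|split; auto].
  - left. apply Hf. rewrite met_sym; auto. eapply Rlt_le_trans; [exact Hn| apply Rmin_l].
  - left. eapply Rlt_le_trans; [exact Hn | apply Rmin_r].
Qed.

Lemma orbit_cluster_CR {X} (d : X -> X -> R) f : is_metric d -> metric_continuous d f ->
  forall (y : X) p z, (1 <= p)%nat ->
  cluster d (fun m => Nat.iter (m*p) f y) z -> CR d f z.
Proof.
  intros Hm Hc y p z Hp Hcl. apply CR_crit; auto. intros e He.
  destruct (Hc z e He) as [r [Hr Hf]].
  destruct (Hcl (Rmin r e) ltac:(apply Rmin_pos; lra) 0%nat) as [a [_ Ha]].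
  destruct (Hcl e He (S a)) as [b [Hab Hb]].
  exists ((b-a)*p)%nat, (fun j => Nat.iter j f (Nat.iter (a*p) f y)).
  split; [nia|]. split; [|split].
  - change (Nat.iter 0 f (Nat.iter (a*p) f y)) with (Nat.iter (a*p) f y).
    left. apply Hf. rewrite met_sym; auto.
    eapply Rlt_le_trans; [exact Ha| apply Rmin_l].
  - intros j _. change (f (Nat.iter j f (Nat.iter (a * p) f y))) with
      (Nat.iter (S j) f (Nat.iter (a * p) f y)). rewrite met_refl; auto. lra.
  - cbv beta. rewrite <- Nat.iter_add.
    replace ((b-a)*p + a*p)%nat with (b*p)%nat by nia. left; exact Hb.
Qed.

Lemma CR_inv {X} (d : X -> X -> R) f : is_metric d -> metric_continuous d f ->
  forall x, CR d f x -> CR d f (f x).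
Proof.
  intros Hm Hc x Hx. apply CR_crit; auto. intros e He.
  destruct (Hc (f x) e He) as [r [Hr Hf]].
  destruct (Hx (Rmin e (r/2))) as [k [c [Hk [H0 [Hkk Hs]]]]].
  { apply Rmin_pos; lra. }
  exists k, (fun j => if Nat.ltb j k then c (S j) else f x).
  split; auto. split; [|split].
  - replace (Nat.ltb 0 k) with true by (symmetry; apply Nat.ltb_lt; lia).
    left. apply Hf. pose proof (Hs 0%nat Hk) as H. rewrite H0 in H.
    pose proof (Rmin_r e (r/2)). lra.
  - intros j Hj. replace (Nat.ltb j k) with true by (symmetry; apply Nat.ltb_lt; lia).
    destruct (Nat.ltb (S j) k) eqn:E.
    + apply Nat.ltb_lt in E. pose proof (Hs (S j) E). pose proof (Rmin_l e (r/2)). lra.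
    + apply Nat.ltb_ge in E. assert (S j = k) by lia. rewrite H, Hkk.
      rewrite met_refl; auto. lra.
  - rewrite Nat.ltb_irrefl. rewrite met_refl; auto. lra.
Qed.

Lemma chain_mono {X} (d : X -> X -> R) f e1 e2 a b : e1 <= e2 -> chain d f e1 a b -> chain d f e2 a b.
Proof.
  intros He [k [c [Hk [H0 [Hkk Hs]]]]]. exists k, c. repeat split; auto.
  intros j Hj. specialize (Hs j Hj). lra.
Qed.

Lemma chain_trans {X} (d : X -> X -> R) f eta a b c :
  chain d f eta a b -> chain d f eta b c -> chain d f eta a c.
Proof.
  intros [k1 [c1 [Hk1 [H10 [H1k H1s]]]]] [k2 [c2 [Hk2 [H20 [H2k H2s]]]]].
  exists (k1 + k2)%nat, (fun j => if Nat.ltb j k1 then c1 j else c2 (j - k1)%nat).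
  split; [lia|]. split.
  { replace (Nat.ltb 0 k1) with true by (symmetry; apply Nat.ltb_lt; lia). auto. }
  split.
  { replace (Nat.ltb (k1+k2) k1) with false by (symmetry; apply Nat.ltb_ge; lia).
    replace (k1 + k2 - k1)%nat with k2 by lia. auto. }
  intros j Hj. destruct (Nat.ltb j k1) eqn:E1.
  - apply Nat.ltb_lt in E1. destruct (Nat.ltb (S j) k1) eqn:E2.
    + apply H1s; auto.
    + apply Nat.ltb_ge in E2. assert (S j = k1) by lia.
      replace (S j - k1)%nat with 0%nat by lia. rewrite H20, <- H1k, <- H.
      apply H1s; auto.
  - apply Nat.ltb_ge in E1.
    replace (Nat.ltb (S j) k1) with false by (symmetry; apply Nat.ltb_ge; lia).
    replace (S j - k1)%nat with (S (j - k1)) by lia. apply H2s. lia.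
Qed.

Lemma back_step {X} (d : X -> X -> R) f : is_metric d ->
  forall a b delta gamma, 0 < gamma -> CR d f a -> CR d f b -> d (f b) a <= delta ->
  chain d f (delta + 2*gamma) a b.
Proof.
  intros Hm a b delta gamma Hg Ha Hb Hab.
  destruct (Ha gamma Hg) as [k1 [c1 [Hk1 [H10 [H1k H1s]]]]].
  destruct (Hb gamma Hg) as [k2 [c2 [Hk2 [H20 [H2k H2s]]]]].
  assert (Hd0 : 0 <= delta).
  { pose proof (met_tri d Hm (f b) a (f b)). rewrite met_refl in H; auto.
    rewrite (met_sym d Hm a (f b)) in H. lra. }
  exists (k1 + k2 - 1)%nat, (fun j => if Nat.ltb j k1 then c1 j else c2 (S (j - k1))).
  split; [lia|]. split.
  { replace (Nat.ltb 0 k1) with true by (symmetry; apply Nat.ltb_lt; lia). auto. }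
  split.
  { replace (Nat.ltb (k1+k2-1) k1) with false by (symmetry; apply Nat.ltb_ge; lia).
    replace (S (k1 + k2 - 1 - k1))%nat with k2 by lia. auto. }
  intros j Hj. destruct (Nat.ltb j k1) eqn:E1.
  - apply Nat.ltb_lt in E1. destruct (Nat.ltb (S j) k1) eqn:E2.
    + apply Nat.ltb_lt in E2. pose proof (H1s j E1). lra.
    + apply Nat.ltb_ge in E2. assert (S j = k1) by lia.
      replace (S j - k1)%nat with 0%nat by lia.
      pose proof (H1s j E1) as A. rewrite H, H1k in A.
      pose proof (H2s 0%nat Hk2) as B. rewrite H20 in B.
      pose proof (met_tri d Hm (f (c1 j)) a (c2 1%nat)) as T1.
      pose proof (met_tri d Hm a (f b) (c2 1%nat)) as T2.
      rewrite (met_sym d Hm a (f b)) in T2. lra.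
  - apply Nat.ltb_ge in E1.
    replace (Nat.ltb (S j) k1) with false by (symmetry; apply Nat.ltb_ge; lia).
    replace (S j - k1)%nat with (S (j - k1)) by lia.
    pose proof (H2s (S (j - k1)) ltac:(lia)). lra.
Qed.

Lemma back_chain {X} (d : X -> X -> R) f : is_metric d ->
  forall (x : nat -> X) delta gamma, 0 < delta -> 0 < gamma ->
  (forall i, CR d f (x i)) -> (forall i, d (f (x i)) (x (S i)) <= delta) ->
  forall n, chain d f (delta + 2*gamma) (x n) (x 0%nat).
Proof.
  intros Hm x delta gamma Hd Hg Hx Hp n. induction n as [|n IH].
  - apply chain_mono with gamma; [lra|]. apply Hx; auto.
  - eapply chain_trans; [|exact IH]. apply back_step; auto.
Qed.

Lemma mod_S (j p : nat) : (1 <= p)%nat ->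
  ((S j) mod p = S (j mod p) /\ (S (j mod p) < p)%nat) \/
  ((S j) mod p = 0%nat /\ S (j mod p) = p).
Proof.
  intros Hp. pose proof (Nat.mod_upper_bound j p ltac:(lia)) as Hq.
  pose proof (Nat.Div0.div_mod j p) as Hdm.
  assert (HS : S j = (S (j mod p) + (j / p) * p)%nat) by lia.
  destruct (Nat.lt_ge_cases (S (j mod p)) p) as [H|H].
  - left. split; auto. rewrite HS, Nat.Div0.mod_add. apply Nat.mod_small; auto.
  - right. assert (E : S (j mod p) = p) by lia. split; auto.
    rewrite HS, E. replace (p + j / p * p)%nat with ((1 + j/p) * p)%nat by lia.
    apply Nat.Div0.mod_mul.
Qed.

Lemma stepA {X} (d : X -> X -> R) f L : is_metric d -> metric_continuous d f ->
  metric_compact d -> forall delta0,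
  (forall delta, 0 < delta -> delta <= delta0 -> forall xs, pseudo_orbit d f delta xs ->
     exists y, shadowed d f (L*delta) xs y) ->
  forall (x : nat -> X) delta gamma n, 0 < delta -> 0 < gamma -> delta + 2*gamma <= delta0 ->
  (forall i, CR d f (x i)) -> (forall i, d (f (x i)) (x (S i)) <= delta) ->
  exists z, CR d f z /\ forall i, (i <= n)%nat ->
     d (Nat.iter i f z) (x i) <= L*(delta+2*gamma).
Proof.
  intros Hm Hc Hcomp delta0 Hsh x delta gamma n Hd Hg Hd0 Hx Hp.
  destruct (back_chain d f Hm x delta gamma Hd Hg Hx Hp n) as [k [r [Hk [Hr0 [Hrk Hrs]]]]].
  set (p := (n + k)%nat).
  set (c := fun j => if Nat.leb j n then x j else r (j - n)%nat).
  assert (Hcge : forall q, (n <= q)%nat -> c q = r (q - n)%nat).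
  { intros q Hq. unfold c. destruct (Nat.leb q n) eqn:E.
    - apply Nat.leb_le in E. assert (q = n) by lia. subst q.
      rewrite Nat.sub_diag. auto.
    - auto. }
  assert (Hc0 : c 0%nat = x 0%nat) by reflexivity.
  assert (Hcp : c p = c 0%nat).
  { rewrite Hcge by (unfold p; lia). unfold p. replace (n + k - n)%nat with k by lia.
    rewrite Hrk. auto. }
  assert (Hstep : forall q, (q < p)%nat -> d (f (c q)) (c (S q)) <= delta + 2*gamma).
  { intros q Hq. destruct (Nat.lt_ge_cases q n) as [H|H].
    - unfold c. replace (Nat.leb q n) with true by (symmetry; apply Nat.leb_le; lia).
      replace (Nat.leb (S q) n) with true by (symmetry; apply Nat.leb_le; lia).
      pose proof (Hp q). lra.
    - rewrite (Hcge q H), (Hcge (S q)) by lia.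
      replace (S q - n)%nat with (S (q - n)) by lia. apply Hrs. unfold p in Hq. lia. }
  set (P := fun j => c (j mod p)).
  assert (Hpp : (1 <= p)%nat) by (unfold p; lia).
  assert (HPps : pseudo_orbit d f (delta + 2*gamma) P).
  { intro j. unfold P. destruct (mod_S j p Hpp) as [[E1 E2]|[E1 E2]]; rewrite E1.
    - apply Hstep. lia.
    - rewrite <- Hcp. pose proof (Hstep (j mod p)%nat ltac:(lia)) as Hs.
      rewrite E2 in Hs. exact Hs. }
  destruct (Hsh (delta + 2*gamma) ltac:(lra) Hd0 P HPps) as [y Hy].
  destruct (cluster_exists d Hm Hcomp (fun m => Nat.iter (m*p) f y)) as [z Hz].
  exists z. split.
  - eapply orbit_cluster_CR; eauto.
  - intros i Hi.
    assert (HPi : P i = x i).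
    { unfold P. rewrite Nat.mod_small by (unfold p; lia). unfold c.
      replace (Nat.leb i n) with true by (symmetry; apply Nat.leb_le; lia). auto. }
    rewrite <- HPi.
    apply (cluster_shadow d f Hm Hc (fun m => Nat.iter (m*p) f y) P
             (L*(delta+2*gamma)) (fun _ => 0) z Hz).
    + intros eta Heta. exists 0%nat. intros; lra.
    + intros i0. exists 0%nat. intros m _. rewrite Rplus_0_r.
      cbv beta. rewrite <- Nat.iter_add.
      replace (P i0) with (P (i0 + m*p)%nat).
      * apply Hy.
      * unfold P. rewrite Nat.Div0.mod_add. reflexivity.
Qed.

Lemma iter_restrict {X} (f : X -> X) (A : X -> Prop) H (y : {x : X | A x}) i :
  proj1_sig (Nat.iter i (restrict_map f A H) y) = Nat.iter i f (proj1_sig y).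
Proof.
  induction i as [|i IH]; simpl; auto. rewrite <- IH. reflexivity.
Qed.

Lemma INR_unb (r : R) : exists N : nat, r < INR N.
Proof.
  destruct (archimed r) as [H _].
  destruct (Z.le_gt_cases 0 (up r)) as [Hz|Hz].
  - exists (Z.to_nat (up r)). rewrite INR_IZR_INZ, Z2Nat.id; auto.
  - exists 0%nat. simpl. apply IZR_lt in Hz. lra.
Qed.

Theorem theorem1p7 (X : Type) (d : X -> X -> R) (f : X -> X) (L : R) :
  is_metric d -> metric_compact d -> 0 < L -> metric_continuous d f ->
  lipschitz_shadowing d f L ->
  exists H : (forall x, CR d f x -> CR d f (f x)),
    lipschitz_shadowing (restrict_metric d (CR d f)) (restrict_map f (CR d f) H) L.
Proof.
  intros Hm Hcomp HL Hc [delta0 [Hdelta0 Hsh]].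
  exists (CR_inv d f Hm Hc).
  exists (delta0/3). split; [lra|].
  intros delta Hd Hdle xs' Hps.
  set (x := fun i => proj1_sig (xs' i)).
  assert (Hx : forall i, CR d f (x i)) by (intro i; exact (proj2_sig (xs' i))).
  assert (Hpx : forall i, d (f (x i)) (x (S i)) <= delta) by (intro i; exact (Hps i)).
  assert (Hv : forall n : nat, exists z, CR d f z /\ forall i, (i <= n)%nat ->
     d (Nat.iter i f z) (x i) <= L*(delta+2*(delta/(INR n + 1)))).
  { intro n. pose proof (pos_INR n) as Hn.
    apply (stepA d f L Hm Hc Hcomp delta0 Hsh x delta (delta/(INR n + 1)) n Hd); auto.
    - apply Rdiv_lt_0_compat; lra.
    - assert (delta/(INR n + 1) <= delta).
      { unfold Rdiv. rewrite <- (Rmult_1_r delta) at 2. apply Rmult_le_compat_l; [lra|].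
        rewrite <- Rinv_1. apply Rinv_le_contravar; lra. }
      lra. }
  set (v := fun n => proj1_sig (constructive_indefinite_description _ (Hv n))).
  assert (Hvp : forall n, CR d f (v n) /\ forall i, (i <= n)%nat ->
     d (Nat.iter i f (v n)) (x i) <= L*(delta+2*(delta/(INR n + 1)))).
  { intro n. unfold v. destruct (constructive_indefinite_description _ (Hv n)) as [z Hz].
    exact Hz. }
  destruct (cluster_exists d Hm Hcomp v) as [z Hz].
  assert (HzCR : CR d f z).
  { apply (cluster_CR d f Hm Hc v z); auto. intro n; apply Hvp. }
  exists (exist _ z HzCR). intro i. unfold restrict_metric. rewrite iter_restrict. simpl.
  apply (cluster_shadow d f Hm Hc v x (L*delta) (fun n => 2*L*delta/(INR n + 1)) z Hz).
  - intros eta Heta. destruct (INR_unb (2*L*delta/eta)) as [N HN]. exists N.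
    intros n Hn. apply le_INR in Hn.
    assert (Hpos : 0 < INR n + 1) by (pose proof (pos_INR n); lra).
    apply (Rmult_le_reg_r (INR n + 1)); auto.
    unfold Rdiv. rewrite Rmult_assoc, Rinv_l by lra. rewrite Rmult_1_r.
    assert (2*L*delta/eta * eta = 2*L*delta) by (field; lra).
    assert (2*L*delta/eta * eta <= INR n * eta) by (apply Rmult_le_compat_r; lra).
    nra.
  - intro i0. exists i0. intros n Hn. destruct (Hvp n) as [_ H].
    specialize (H i0 Hn).
    replace (L*delta + 2*L*delta/(INR n + 1)) with (L*(delta+2*(delta/(INR n + 1)))); auto.
    field. pose proof (pos_INR n). lra.
Qed.
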